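(* Let $V$ be an $n$-dimensional real vector space and $\mu\in(V^* )^{\wedge p}$ a nonzero exterior $p$-form of rank $r$, with kernel $Z$ and divisibility space $D$, so that $\dim Z=n-r$; set $s=n-\dim D$ (one has $s\le r$). Then: (a) $s\neq p-1$ and $s\le p$, with $s=p$ if and only if $\mu$ is decomposable; (b) for any basis $\xi^1,\dots,\xi^n$ of $V^*$ such that $\xi^1,\dots,\xi^s$ is a basis of the polar space $D'$ of $D$, one has $\mu=\xi^1\wedge\dots\wedge\xi^s\wedge\zeta$, where the $(p-s)$-form $\zeta$ is indivisible and is a linear combination of $(p-s)$-fold exterior products of $1$-forms from $\{\xi^{s+1},\dots,\xi^n\}$; (c) if $\mu=\xi^1\wedge\dots\wedge\xi^s\wedge\zeta$ for some basis $\xi^1,\dots,\xi^s$ of $D'$ and some exterior $(p-s)$-form $\zeta$, then the restriction of any such $\zeta$ to $D$ is uniquely determined by $\mu$ up to a nonzero scalar factor; (d) this restriction of $\zeta$ to $D$ is indivisible in $D$.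
   Context: The rank of $\mu$ is the minimum dimension of a vector space $W$ such that $\mu$ is the pullback of an exterior $p$-form on $W$ under some linear map $V\to W$. The kernel of $\mu$ is $Z=\{v\in V:\mu(v,\cdot,\dots,\cdot)=0\}$. The divisibility space $D$ is the common kernel of all $\xi\in V^*$ with $\xi\wedge\mu=0$; $D'=\{\xi\in V^*:\xi\wedge\mu=0\}$ is its polar space. A $p$-form is decomposable if it is an exterior product of $p$ $1$-forms. A form is indivisible (in a space) if its divisibility space is the whole space, i.e. $\xi\wedge\mu\neq0$ for all nonzero $1$-forms $\xi$; a nonzero $0$-form is indivisible. *)

(* Defs.v *)
From HB Require Import structures.
From mathcomp Require Import all_boot all_order all_algebra.
From mathcomp Require Import reals.
Set Implicit Arguments. Unset Strict Implicit. Unset Printing Implicit Defensive.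
Import Order.TTheory GRing.Theory Num.Theory.
Local Open Scope ring_scope.

(* V = R^n realised as row vectors 'rV[R]_n; V^* realised as row vectors too,
   with the pairing [ev xi v]. *)
Section Forms.
Variables (R : realType) (n : nat).

Definition ev (xi v : 'rV[R]_n) : R := \sum_(i < n) xi 0 i * v 0 i.

(* A (possibly multi-degree) eform: a function of finite sequences of vectors.
   A p-eform is one vanishing on sequences of length <> p, multilinear and
   alternating on sequences of length p. *)
Definition eform := seq 'rV[R]_n -> R.

Definition zeroF : eform := fun _ => 0.

Definition form1 : eform := fun vs => if vs is [::] then 1 else 0.

Definition is_pform (p : nat) (mu : eform) : Prop :=
  [/\ (forall vs, size vs != p -> mu vs = 0),
      (forall vs (i : nat) (a : R) (u w : 'rV[R]_n), (i < size vs)%N ->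
          mu (set_nth 0 vs i (a *: u + w)) =
          a * mu (set_nth 0 vs i u) + mu (set_nth 0 vs i w))
    & (forall vs (i j : nat), (i < j)%N -> (j < size vs)%N ->
          nth 0 vs i = nth 0 vs j -> mu vs = 0)].

Definition wedge1 (xi : 'rV[R]_n) (mu : eform) : eform :=
  fun vs => \sum_(i < size vs)
     (-1) ^+ i * ev xi (nth 0 vs i) * mu (take i vs ++ drop i.+1 vs).

Definition wedges (xs : seq 'rV[R]_n) (zeta : eform) : eform :=
  foldr wedge1 zeta xs.

(* mu is decomposable: a product of p one-forms (a scalar is allowed, so that
   every nonzero 0-eform is decomposable) *)
Definition decomposable (p : nat) (mu : eform) : Prop :=
  exists (c : R) (xs : seq 'rV[R]_n),
    size xs = p /\ mu = (fun vs => c * wedges xs form1 vs).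

Definition indivisible (mu : eform) : Prop :=
  forall xi : 'rV[R]_n, xi != 0 -> wedge1 xi mu <> zeroF.

Definition inD (mu : eform) (v : 'rV[R]_n) : Prop :=
  forall xi : 'rV[R]_n, wedge1 xi mu = zeroF -> ev xi v = 0.

Definition polar_basis (mu : eform) (k : nat) (Y : 'M[R]_(k, n)) : Prop :=
  row_free Y /\ (forall xi : 'rV[R]_n, wedge1 xi mu = zeroF <-> (xi <= Y)%MS).

Definition rows (k : nat) (Y : 'M[R]_(k, n)) : seq 'rV[R]_n :=
  [seq row i Y | i <- enum 'I_k].

End Forms.
Arguments zeroF {R n}.
Arguments form1 {R n}.

(* Main.v *)
Require Import Defs.
From HB Require Import structures.
From mathcomp Require Import all_boot all_order all_algebra.
From mathcomp Require Import reals.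
From mathcomp Require Import ring lra zify.
From Stdlib Require Import Classical.
From Stdlib Require Import FunctionalExtensionality.
Import Order.TTheory GRing.Theory Num.Theory.
Local Open Scope ring_scope.
Section Forms2.
Context {R : realType} {n : nat}.
Local Notation V := 'rV[R]_n.
Local Notation F := (eform R n).

Definition ctr (v : V) (f : F) : F := fun vs => f (v :: vs).

Lemma wedge1_nil x (f : F) : wedge1 x f [::] = 0.
Proof. by rewrite /wedge1 big_ord0. Qed.

Lemma wedge1_cons x (f : F) v vs :
  wedge1 x f (v :: vs) = ev x v * f vs - wedge1 x (ctr v f) vs.
Proof.
rewrite /wedge1 /= big_ord_recl /= expr0 mul1r drop0; congr (_ + _).
rewrite -sumrN; apply: eq_bigr => i _; rewrite /= exprS /ctr.
by rewrite mulN1r !mulNr.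
Qed.

Lemma evDl a (x y v : V) : ev (a *: x + y) v = a * ev x v + ev y v.
Proof.
rewrite /ev mulr_sumr -big_split /=; apply: eq_bigr => i _.
by rewrite !mxE mulrDl mulrA.
Qed.

Lemma evDr a (x u w : V) : ev x (a *: u + w) = a * ev x u + ev x w.
Proof.
rewrite /ev mulr_sumr -big_split /=; apply: eq_bigr => i _.
by rewrite !mxE mulrDr mulrCA.
Qed.

Lemma ev0l (v : V) : ev 0 v = 0.
Proof. by rewrite /ev big1 // => i _; rewrite mxE mul0r. Qed.

Lemma ev0r (x : V) : ev x 0 = 0.
Proof. by rewrite /ev big1 // => i _; rewrite mxE mulr0. Qed.

Lemma ev_suml (I : finType) (P : pred I) (c : I -> R) (x : I -> V) v :
  ev (\sum_(i | P i) c i *: x i) v = \sum_(i | P i) c i * ev (x i) v.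
Proof.
apply: (big_rec2 (fun a b => ev a v = b)); first exact: ev0l.
by move=> i a b _ <-; rewrite evDl.
Qed.

Lemma ev_sumr (I : finType) (P : pred I) (c : I -> R) (x : I -> V) v :
  ev v (\sum_(i | P i) c i *: x i) = \sum_(i | P i) c i * ev v (x i).
Proof.
apply: (big_rec2 (fun a b => ev v a = b)); first exact: ev0r.
by move=> i a b _ <-; rewrite evDr.
Qed.

Lemma wedge1_lin x a b (f g : F) vs :
  wedge1 x (fun ws => a * f ws + b * g ws) vs = a * wedge1 x f vs + b * wedge1 x g vs.
Proof.
rewrite /wedge1 !mulr_sumr -big_split /=; apply: eq_bigr => i _.
ring.
Qed.

Lemma wedge1_linv a (x y : V) (f : F) vs :
  wedge1 (a *: x + y) f vs = a * wedge1 x f vs + wedge1 y f vs.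
Proof.
rewrite /wedge1 mulr_sumr -big_split /=; apply: eq_bigr => i _.
rewrite evDl; ring.
Qed.

Lemma wedge1_zero x : wedge1 x (zeroF : F) = zeroF.
Proof.
apply: functional_extensionality => vs; rewrite /wedge1 /zeroF big1 //.
by move=> i _; rewrite mulr0.
Qed.

Lemma wedge1_scale x c (f : F) vs :
  wedge1 x (fun ws => c * f ws) vs = c * wedge1 x f vs.
Proof.
have := wedge1_lin x c 0 f f vs; rewrite !mul0r !addr0 => <-.
by congr wedge1; apply: functional_extensionality => ws; rewrite mul0r addr0.
Qed.

Lemma ctr_wedge1 x v (f : F) :
  ctr v (wedge1 x f) = fun ws => ev x v * f ws + (-1) * wedge1 x (ctr v f) ws.
Proof.
by apply: functional_extensionality => ws; rewrite /ctr wedge1_cons mulN1r.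
Qed.

Lemma wedge1_anti a b (f : F) vs :
  wedge1 a (wedge1 b f) vs = - wedge1 b (wedge1 a f) vs.
Proof.
elim: vs f => [|v vs IH] f; first by rewrite !wedge1_nil oppr0.
rewrite !wedge1_cons !ctr_wedge1 !wedge1_lin IH.
rewrite !mulN1r; lra.
Qed.

Lemma wedge1_same a (f : F) vs : wedge1 a (wedge1 a f) vs = 0.
Proof.
elim: vs f => [|v vs IH] f; first by rewrite wedge1_nil.
rewrite !wedge1_cons !ctr_wedge1 !wedge1_lin IH; lra.
Qed.

Lemma wedges_cons x xs (f : F) : wedges (x :: xs) f = wedge1 x (wedges xs f).
Proof. by []. Qed.

Lemma wedges_zero xs : wedges xs (zeroF : F) = zeroF.
Proof. by elim: xs => [|x xs IH] //=; rewrite IH wedge1_zero. Qed.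

Lemma wedges_scale xs c (f : F) :
  wedges xs (fun ws => c * f ws) = fun vs => c * wedges xs f vs.
Proof.
elim: xs => [|x xs IH] //=; rewrite IH.
by apply: functional_extensionality => vs; rewrite wedge1_scale.
Qed.

Lemma wedge1_wedges x xs (f : F) vs :
  wedge1 x (wedges xs f) vs = (-1) ^+ size xs * wedges xs (wedge1 x f) vs.
Proof.
elim: xs vs => [|y xs IH] vs /=; first by rewrite expr0 mul1r.
rewrite wedge1_anti.
have -> : wedge1 x (wedges xs f) = fun ws => (-1) ^+ size xs * wedges xs (wedge1 x f) ws.
  by apply: functional_extensionality => ws; rewrite IH.
by rewrite wedge1_scale exprS mulN1r mulNr.
Qed.

Lemma wedge1_mem x xs (f : F) : x \in xs -> wedge1 x (wedges xs f) = zeroF.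
Proof.
elim: xs => [|y xs IH] //; rewrite inE => /orP [/eqP ->|xin] /=.
  by apply: functional_extensionality => vs; rewrite wedge1_same.
apply: functional_extensionality => vs; rewrite wedge1_anti IH //.
by rewrite wedge1_zero /zeroF oppr0.
Qed.

Lemma wedge1_kill x (f : F) us :
  (forall u, u \in us -> ev x u = 0) -> wedge1 x f us = 0.
Proof.
move=> H; rewrite /wedge1 big1 // => i _.
by rewrite H ?mulr0 ?mul0r // mem_nth.
Qed.

Definition ctrs (ws : seq V) (f : F) : F := fun vs => f (ws ++ vs).

Lemma div_step y w (f : F) : ev y w = 1 -> wedge1 y f = zeroF ->
  f = wedge1 y (ctr w f).
Proof.
move=> e1 h; apply: functional_extensionality => vs.
have := wedge1_cons y f w vs; rewrite h e1 mul1r /zeroF => /eqP.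
by rewrite eq_sym subr_eq0 => /eqP.
Qed.

Lemma div_step2 y w (f : F) : ev y w = 0 -> wedge1 y f = zeroF ->
  wedge1 y (ctr w f) = zeroF.
Proof.
move=> e0 h; apply: functional_extensionality => vs.
have := wedge1_cons y f w vs; rewrite h e0 mul0r /zeroF sub0r => /eqP.
by rewrite eq_sym oppr_eq0 => /eqP.
Qed.

Lemma div_lemma (I : eqType) (l : seq I) (yf wf : I -> V) (f : F) :
  uniq l -> (forall i j, i \in l -> j \in l -> ev (yf i) (wf j) = (i == j)%:R) ->
  (forall i, i \in l -> wedge1 (yf i) f = zeroF) ->
  f = wedges (map yf l) (ctrs (map wf l) f).
Proof.
elim: l f => [|i l IH] f /=.
  by move=> _ _ _; apply: functional_extensionality.
move=> /andP [il ul] hd hk.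
have e1 : ev (yf i) (wf i) = 1 by rewrite hd ?inE ?eqxx.
rewrite {1}(@div_step (yf i) (wf i) f e1 (hk i _)) ?inE ?eqxx //.
congr wedge1; apply: IH => //.
  by move=> j k jl kl; apply: hd; rewrite inE ?jl ?kl orbT.
move=> j jl; apply: div_step2; last by apply: hk; rewrite inE jl orbT.
rewrite hd ?inE ?eqxx ?jl ?orbT //.
by case: eqP => // ji; move: il; rewrite -ji jl.
Qed.

Lemma wedges_dual (I : eqType) (l : seq I) (yf wf : I -> V) :
  uniq l -> (forall i j, i \in l -> j \in l -> ev (yf i) (wf j) = (i == j)%:R) ->
  wedges (map yf l) form1 (map wf l) = 1.
Proof.
elim: l => [|i l IH] //= /andP [il ul] hd.
rewrite wedge1_cons hd ?inE ?eqxx // mul1r wedge1_kill ?subr0.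
  by apply: IH => // j k jl kl; apply: hd; rewrite inE ?jl ?kl orbT.
move=> u /mapP [j jl ->]; rewrite hd ?inE ?eqxx ?jl ?orbT //.
by case: eqP => // ji; move: il; rewrite ji jl.
Qed.

Lemma size_rem i (us : seq V) : (i < size us)%N ->
  size (take i us ++ drop i.+1 us) = (size us).-1.
Proof.
move=> h; rewrite size_cat size_take size_drop h.
by case: (size us) h => // m; rewrite ltnS => h'; rewrite subSS subnKC.
Qed.

Lemma drop_catle (T : Type) k (s1 s2 : seq T) : (k <= size s1)%N ->
  drop k (s1 ++ s2) = drop k s1 ++ s2.
Proof.
rewrite drop_cat leq_eqVlt => /orP [/eqP ->|->] //.
by rewrite ltnn subnn drop0 drop_size.
Qed.

Lemma wedges_split (ys : seq V) (z : F) us vs :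
  (forall y v, y \in ys -> v \in vs -> ev y v = 0) -> size us = size ys ->
  wedges ys z (us ++ vs) = wedges ys form1 us * z vs.
Proof.
elim: ys us => [|y ys IH] us hk /=.
  by case: us => //= _; rewrite mul1r.
move=> hs; rewrite /wedge1.
rewrite size_cat big_split_ord /= [X in _ + X]big1 ?addr0; last first.
  move=> j _; rewrite nth_cat ltnNge leq_addr /= addKn.
  by rewrite hk ?mulr0 ?mul0r ?inE ?eqxx // mem_nth.
rewrite mulr_suml; apply: eq_bigr => i _.
have hi : (i < size us)%N by [].
rewrite nth_cat hi take_cat hi drop_catle //.
rewrite catA IH; first by rewrite mulrA.
  by move=> a b ay bv; apply: hk; rewrite ?inE ?ay ?orbT.
by rewrite size_rem // hs.
Qed.

Definition lin0 (g : F) := forall a u w vs,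
  g ((a *: u + w) :: vs) = a * g (u :: vs) + g (w :: vs).
Definition alt0 (g : F) := forall u vs, g (u :: u :: vs) = 0.
Definition good (q : nat) (f : F) :=
  (forall vs, size vs != q -> f vs = 0) /\
  (forall pre, lin0 (ctrs pre f) /\ alt0 (ctrs pre f)).

Lemma set_nth_catl (pre vs : seq V) (x y : V) :
  set_nth 0 (pre ++ x :: vs) (size pre) y = pre ++ y :: vs.
Proof. by elim: pre => //= a pre ->. Qed.

Lemma pform_good q (f : F) : is_pform q f -> good q f.
Proof.
case=> hs hl ha; split => // pre; split.
  move=> a u w vs; rewrite /ctrs.
  have := hl (pre ++ u :: vs) (size pre) a u w.
  rewrite size_cat /= addnS ltnS leq_addr => /(_ isT).
  by rewrite !set_nth_catl.
move=> u vs; rewrite /ctrs; apply: (ha _ (size pre) (size pre).+1) => //.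
  by rewrite size_cat /= !addnS !ltnS leq_addr.
by rewrite !nth_cat ltnn subnn /= ltnNge leqnSn /= subSn // subnn.
Qed.

Lemma lin0_comb a b (f g : F) : lin0 f -> lin0 g ->
  lin0 (fun vs => a * f vs + b * g vs).
Proof. by move=> hf hg c u w vs; rewrite hf hg; ring. Qed.

Lemma alt0_comb a b (f g : F) : alt0 f -> alt0 g ->
  alt0 (fun vs => a * f vs + b * g vs).
Proof. by move=> hf hg u vs; rewrite hf hg !mulr0 addr0. Qed.

Lemma good_comb {q} a b {f g : F} : good q f -> good q g ->
  good q (fun vs => a * f vs + b * g vs).
Proof.
move=> [sf hf] [sg hg]; split.
  by move=> vs hv; rewrite sf // sg // !mulr0 addr0.
move=> pre; have [lf af] := hf pre; have [lg ag] := hg pre.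
split.
  by move: lf lg; rewrite /lin0 /ctrs => lf lg c u w vs /=; rewrite lf lg; ring.
by move: af ag; rewrite /alt0 /ctrs => af ag u vs /=; rewrite af ag !mulr0 addr0.
Qed.

Lemma good_ctr {q} v {f : F} : good q f -> good q.-1 (ctr v f).
Proof.
move=> [sf hf]; split; last by move=> pre; exact: (hf (v :: pre)).
move=> vs hv; rewrite /ctr sf //=; move: hv; case: (q) => //.
Qed.

Lemma good_ctrs {q} ws {f : F} : good q f -> good (q - size ws) (ctrs ws f).
Proof.
elim: ws q f => [|w ws IH] q f hf.
  rewrite subn0; case: hf => sf hf; split => //.
move=> /=; have := IH q.-1 (ctr w f) (good_ctr w hf).
by rewrite subnS -subn1 subnAC subn1.
Qed.

Lemma good_wedge1 {q} x {f : F} : good q f -> good q.+1 (wedge1 x f).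
Proof.
move=> gf; split.
  move: gf => [sf _] vs hv; rewrite /wedge1 big1 // => i _.
  rewrite sf ?mulr0 //; rewrite size_rem //.
  by apply: contra hv => /eqP <-; rewrite prednK // (leq_ltn_trans _ (ltn_ord i)).
move=> pre; elim: pre q f gf => [|v pre IH] q f gf.
  move: gf => [sf hf]; have [lf af] := hf [::]; split.
    move=> a u w vs; rewrite /ctrs /= !wedge1_cons evDr.
    have -> : ctr (a *: u + w) f = fun ws => a * ctr u f ws + 1 * ctr w f ws.
      by apply: functional_extensionality => ws; rewrite /ctr mul1r; apply: lf.
    rewrite wedge1_lin; ring.
  move=> u vs; rewrite /ctrs /= !wedge1_cons.
  have -> : ctr u (ctr u f) = zeroF.
    by apply: functional_extensionality => ws; apply: af.
  rewrite wedge1_zero /zeroF /ctr; ring.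
have e : ctrs (v :: pre) (wedge1 x f) =
   (fun ws => ev x v * ctrs pre f ws + (-1) * ctrs pre (wedge1 x (ctr v f)) ws).
  by apply: functional_extensionality => ws; rewrite /ctrs /= wedge1_cons; ring.
rewrite e; move: (gf) => [_ hf]; have [lf af] := hf pre.
have [lg ag] := IH _ _ (good_ctr v gf).
by split; [exact: lin0_comb | exact: alt0_comb].
Qed.

Lemma lin0_zero (g : F) vs : lin0 g -> g (0 :: vs) = 0.
Proof.
move=> h; have := h 1 0 0 vs; rewrite scaler0 add0r mul1r => H; lra.
Qed.

Lemma lin0_sum (g : F) (I : finType) (P : pred I) (c : I -> R) (x : I -> V) vs :
  lin0 g -> g ((\sum_(i | P i) c i *: x i) :: vs) = \sum_(i | P i) c i * g (x i :: vs).
Proof.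
move=> h; apply: (big_rec2 (fun a b => g (a :: vs) = b)); first exact: lin0_zero.
by move=> i a b _ <-; rewrite h.
Qed.

Lemma good_antisym {q} {f : F} pre a b vs : good q f ->
  f (pre ++ a :: b :: vs) = - f (pre ++ b :: a :: vs).
Proof.
move=> [_ hf]; have [l al] := hf pre; have [l1 _] := hf (rcons pre a);
have [l2 _] := hf (rcons pre b).
have e0 := al (a + b) vs; have e1 := l 1 a b ((a + b) :: vs).
have e2 := l1 1 a b vs; have e3 := l2 1 a b vs.
have e4 := al a vs; have e5 := al b vs.
move: e0 e1 e2 e3 e4 e5; rewrite /ctrs -!cats1 -!catA /= !scale1r !mul1r.
move=> e0 e1 e2 e3 e4 e5; lra.
Qed.

Lemma good_alt {q} {f : F} pre u mid post : good q f ->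
  f (pre ++ u :: mid ++ u :: post) = 0.
Proof.
move=> gf; elim: mid pre => [|m mid IH] pre /=.
  by case: gf => _ /(_ pre) [_ /(_ u post)].
rewrite (good_antisym _ _ _ _ gf).
by have := IH (rcons pre m); rewrite -cats1 -catA /= => ->; rewrite oppr0.
Qed.

Lemma good_alt_in {q} {f : F} pre u vs : good q f -> u \in pre ->
  f (pre ++ u :: vs) = 0.
Proof.
move=> gf /splitPr [p1 p2].
by rewrite -catA /=; apply: good_alt gf.
Qed.

Lemma ev_mul k (Y : 'M[R]_(k, n)) (B : 'M[R]_(n, k)) i j :
  ev (row i Y) (row j B^T) = (Y *m B) i j.
Proof. by rewrite /ev !mxE; apply: eq_bigr => l _; rewrite !mxE. Qed.

Lemma ev_mulT k (v : V) (A : 'M[R]_(k, n)) j : (v *m A^T) 0 j = ev (row j A) v.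
Proof. by rewrite /ev !mxE; apply: eq_bigr => l _; rewrite !mxE mulrC. Qed.

Lemma dual_exists {k} {Y : 'M[R]_(k, n)} : row_free Y ->
  exists W : 'M[R]_(k, n), forall i j, ev (row i Y) (row j W) = (i == j)%:R.
Proof.
case/row_freeP => B hB; exists B^T => i j.
by rewrite ev_mul hB mxE.
Qed.

Lemma ev_sub (xi v : V) (A : 'M[R]_(n, n)) :
  (forall j, ev (row j A) v = 0) -> (xi <= A)%MS -> ev xi v = 0.
Proof.
move=> h /submxP [D ->]; rewrite mulmx_sum_row ev_suml big1 // => j _.
by rewrite h mulr0.
Qed.

Lemma ev_subk k (xi v : V) (A : 'M[R]_(k, n)) :
  (forall j, ev (row j A) v = 0) -> (xi <= A)%MS -> ev xi v = 0.
Proof.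
move=> h /submxP [D ->]; rewrite mulmx_sum_row ev_suml big1 // => j _.
by rewrite h mulr0.
Qed.

Lemma subspace_mx (P : V -> Prop) : P 0 ->
  (forall a x y, P x -> P y -> P (a *: x + y)) ->
  exists A : 'M[R]_n, forall xi, P xi <-> (xi <= A)%MS.
Proof.
move=> P0 Pc.
suff H : forall k (A : 'M[R]_n), (forall xi, (xi <= A)%MS -> P xi) ->
    (n - \rank A <= k)%N -> exists B : 'M[R]_n, forall xi, P xi <-> (xi <= B)%MS.
  apply: (H n 0) => [xi|]; last by rewrite leq_subr.
  by rewrite submx0 => /eqP ->.
elim=> [|k IH] A hA hk.
  case: (classic (exists xi, P xi /\ ~~ (xi <= A)%MS)) => [[xi [Px nx]]|nex].
    exfalso; move: nx; rewrite submx_full //.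
    by rewrite /row_full eqn_leq rank_leq_col /= -subn_eq0 -leqn0.
  exists A => xi; split => [Px|]; last exact: hA.
  by apply/negP => nx; apply: nex; exists xi; split => //; apply/negP.
case: (classic (exists xi, P xi /\ ~~ (xi <= A)%MS)) => [[xi [Px nx]]|nex].
  have hlt : (A < xi + A)%MS.
    rewrite ltmxE addsmxSr /=; apply: contra nx => h.
    exact: submx_trans (addsmxSl _ _) h.
  have := rank_ltmx hlt; have := rank_leq_col (xi + A)%MS => r1 r2.
  apply: (IH (xi + A)%MS); last by lia.
  move=> y /sub_addsmxP [u ->].
  rewrite [u.1]mx11_scalar mul_scalar_mx.
  exact: Pc _ _ _ Px (hA _ (submxMl _ _)).
exists A => xi; split => [Px|]; last exact: hA.
by apply/negP => nx; apply: nex; exists xi; split => //; apply/negP.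
Qed.

Lemma vec_expand (X : 'M[R]_n) (v : V) : X \in unitmx ->
  v = \sum_j ev (row j X) v *: row j (invmx X)^T.
Proof.
move=> uX.
have -> : \sum_j ev (row j X) v *: row j (invmx X)^T = (v *m X^T) *m (invmx X)^T.
  by rewrite mulmx_sum_row; apply: eq_bigr => j _; rewrite ev_mulT.
by rewrite -mulmxA -trmx_mul mulVmx // trmx1 mulmx1.
Qed.

Lemma dual_inv (X : 'M[R]_n) i j : X \in unitmx ->
  ev (row i X) (row j (invmx X)^T) = (i == j)%:R.
Proof. by move=> uX; rewrite ev_mul mulmxV // mxE. Qed.

Lemma sum_delta k (c : 'I_k -> R) j : \sum_i c i * (i == j)%:R = c j.
Proof.
rewrite (bigD1 j) //= eqxx mulr1 big1 ?addr0 // => i /negPf ->.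
by rewrite mulr0.
Qed.

Lemma vanish {k} {Y W : 'M[R]_(k, n)} {q} {f : F} :
  (forall i j, ev (row i Y) (row j W) = (i == j)%:R) -> good q f ->
  (forall i vs, f (row i W :: vs) = 0) ->
  (forall vs, (forall v, v \in vs -> forall i, ev (row i Y) v = 0) -> f vs = 0) ->
  forall vs, f vs = 0.
Proof.
move=> hd gf hw hD vs; elim: vs q f gf hw hD => [|v vs IH] q f gf hw hD.
  by apply: hD.
pose S := \sum_i ev (row i Y) v *: row i W.
pose d := (-1) *: S + v.
have dD : forall j, ev (row j Y) d = 0.
  move=> j; rewrite /d evDr /S ev_sumr.
  under eq_bigr => i _ do rewrite hd.
  rewrite (bigD1 j) //= eqxx mulr1 big1 ?addr0; first by rewrite mulN1r addNr.
  by move=> i /negPf; rewrite eq_sym => ->; rewrite mulr0.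
have ev_d : v = 1 *: S + d by rewrite /d scale1r addrA scaleN1r addrN add0r.
move: (gf) => [_ /(_ [::]) [l0 _]].
have := l0 1 S d vs; rewrite /ctrs /= -ev_d => ->.
rewrite /S lin0_sum // big1 ?mulr0 ?add0r; last by move=> i _; rewrite hw mulr0.
apply: (IH q.-1 (ctr d f) (good_ctr d gf)).
  by move=> i ws; rewrite /ctr -[d :: _]/([::] ++ _) (good_antisym _ _ _ _ gf) /= hw oppr0.
move=> ws hws; apply: hD => u; rewrite inE => /orP [/eqP ->|uw] //.
exact: hws.
Qed.

Definition rowsl {k} (Y : 'M[R]_(k, n)) := [seq row i Y | i <- enum 'I_k].

Lemma polar_rows {mu : F} {k} {Y : 'M[R]_(k, n)} :
  polar_basis mu Y -> forall i, wedge1 (row i Y) mu = zeroF.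
Proof. by move=> [_ h] i; apply/h; exact: row_sub. Qed.

Lemma polar_inD {mu : F} {k} {Y : 'M[R]_(k, n)} v : polar_basis mu Y ->
  (inD mu v <-> forall i, ev (row i Y) v = 0).
Proof.
move=> hY; split.
  by move=> hv i; apply: hv; apply: polar_rows.
move=> h xi /(proj2 hY) hx; exact: ev_subk h hx.
Qed.

Lemma polar_div {mu : F} {k} {Y W : 'M[R]_(k, n)} :
  (forall i j, ev (row i Y) (row j W) = (i == j)%:R) ->
  (forall i, wedge1 (row i Y) mu = zeroF) ->
  mu = wedges (rowsl Y) (ctrs (rowsl W) mu).
Proof.
move=> hd hk; apply: div_lemma; first exact: enum_uniq.
  by move=> i j _ _; apply: hd.
by move=> i _; apply: hk.
Qed.

Lemma rowsl_dual {k} {Y W : 'M[R]_(k, n)} :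
  (forall i j, ev (row i Y) (row j W) = (i == j)%:R) ->
  wedges (rowsl Y) form1 (rowsl W) = 1.
Proof. by move=> hd; apply: wedges_dual; [exact: enum_uniq|move=> i j _ _; apply: hd]. Qed.

Lemma size_rowsl k (Y : 'M[R]_(k, n)) : size (rowsl Y) = k.
Proof. by rewrite size_map size_enum_ord. Qed.

Lemma eval_D {k} {Y W : 'M[R]_(k, n)} (z : F) {vs} :
  (forall i j, ev (row i Y) (row j W) = (i == j)%:R) ->
  (forall v, v \in vs -> forall i, ev (row i Y) v = 0) ->
  wedges (rowsl Y) z (rowsl W ++ vs) = z vs.
Proof.
move=> hd hv; rewrite wedges_split ?rowsl_dual ?mul1r ?size_rowsl //.
by move=> y v /mapP [i _ ->] vv; apply: hv.
Qed.

Lemma part_c (mu : F) p k (Y1 Y2 : 'M[R]_(k, n)) (z1 z2 : F) :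
  good p mu -> mu <> zeroF -> polar_basis mu Y1 -> polar_basis mu Y2 ->
  mu = wedges (rowsl Y1) z1 -> mu = wedges (rowsl Y2) z2 ->
  exists c : R, c != 0 /\
    forall vs, (forall v, v \in vs -> inD mu v) -> z1 vs = c * z2 vs.
Proof.
move=> gm mu0 hY1 hY2 e1 e2.
have [W1 hW1] := dual_exists (proj1 hY1).
pose c := wedges (rowsl Y2) form1 (rowsl W1).
have key : forall vs, (forall v, v \in vs -> inD mu v) -> z1 vs = c * z2 vs.
  move=> vs hvs.
  have hv1 : forall v, v \in vs -> forall i, ev (row i Y1) v = 0.
    by move=> v /hvs /(polar_inD v hY1).
  have hv2 : forall v, v \in vs -> forall i, ev (row i Y2) v = 0.
    by move=> v /hvs /(polar_inD v hY2).
  rewrite -(eval_D z1 hW1 hv1) -e1 {1}e2 wedges_split ?size_rowsl //.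
  by move=> y v /mapP [i _ ->] vv; apply: hv2.
exists c; split => //.
apply/negP => /eqP c0.
have zero1 : forall vs, (forall v, v \in vs -> inD mu v) -> z1 vs = 0.
  by move=> vs hvs; rewrite key // c0 mul0r.
apply: mu0.
have hd := polar_div hW1 (polar_rows hY1).
have g0 : forall vs, ctrs (rowsl W1) mu vs = 0.
  apply: (vanish hW1 (good_ctrs (rowsl W1) gm)).
    move=> i vs; rewrite /ctrs; apply: (good_alt_in _ _ _ gm).
    by apply/mapP; exists i => //; rewrite mem_enum.
  move=> vs hvs; rewrite /ctrs.
  rewrite e1 eval_D // zero1 // => v /hvs h.
  by apply/(polar_inD v hY1).
rewrite hd; have -> : ctrs (rowsl W1) mu = zeroF.
  by apply: functional_extensionality => vs; rewrite g0.
exact: wedges_zero.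
Qed.

Lemma part_d (mu : F) p k (Y : 'M[R]_(k, n)) (z : F) :
  good p mu -> polar_basis mu Y -> mu = wedges (rowsl Y) z ->
  forall xi, (exists v, inD mu v /\ ev xi v != 0) ->
  exists vs, (forall v, v \in vs -> inD mu v) /\ wedge1 xi z vs != 0.
Proof.
move=> gm hY e xi [v0 [hv0 nz]].
apply: NNPP => H.
have zeroD : forall vs, (forall v, v \in vs -> inD mu v) -> wedge1 xi z vs = 0.
  move=> vs hvs; case: (eqVneq (wedge1 xi z vs) 0) => // ne.
  by exfalso; apply: H; exists vs.
have gf := good_wedge1 xi gm.
have hk : forall i, wedge1 (row i Y) (wedge1 xi mu) = zeroF.
  move=> i; apply: functional_extensionality => vs.
  by rewrite wedge1_anti (polar_rows hY) wedge1_zero /zeroF oppr0.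
have [W hW] := dual_exists (proj1 hY).
have hd := polar_div hW hk.
have g0 : forall vs, ctrs (rowsl W) (wedge1 xi mu) vs = 0.
  apply: (vanish hW (good_ctrs (rowsl W) gf)).
    move=> i vs; rewrite /ctrs; apply: (good_alt_in _ _ _ gf).
    by apply/mapP; exists i => //; rewrite mem_enum.
  move=> vs hvs; rewrite /ctrs {1}e wedge1_wedges eval_D // zeroD ?mulr0 //.
  by move=> v /hvs h; apply/(polar_inD v hY).
have f0 : wedge1 xi mu = zeroF.
  rewrite hd; have -> : ctrs (rowsl W) (wedge1 xi mu) = zeroF.
    by apply: functional_extensionality => vs; rewrite g0.
  exact: wedges_zero.
by move: nz; rewrite (hv0 xi f0) eqxx.
Qed.

Lemma wedge1_0 (f : F) : wedge1 0 f = zeroF.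
Proof.
apply: functional_extensionality => vs; rewrite /wedge1 big1 // => i _.
by rewrite ev0l mulr0 mul0r.
Qed.

Lemma polar_exists (mu : F) (Dm : 'M[R]_n) :
  (forall v : V, (v <= Dm)%MS <-> inD mu v) ->
  exists Y : 'M[R]_(n - \rank Dm, n), polar_basis mu Y.
Proof.
move=> hD.
have Pc : forall a x y, wedge1 x mu = zeroF -> wedge1 y mu = zeroF ->
    wedge1 (a *: x + y) mu = zeroF.
  move=> a x y Px Py; apply: functional_extensionality => vs.
  by rewrite wedge1_linv Px Py /zeroF mulr0 addr0.
have [A hA] := @subspace_mx (fun xi => wedge1 xi mu = zeroF) (wedge1_0 mu) Pc.
pose K := kermx A^T.
have hK : forall v : V, (v <= Dm)%MS = (v <= K)%MS.
  move=> v; apply/idP/idP => h.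
    rewrite /K sub_kermx; apply/eqP/rowP => j; rewrite ev_mulT mxE.
    by move/hD: h; apply; apply/hA; exact: row_sub.
  apply/hD => xi /hA hx; apply: ev_sub hx => j.
  by move: h; rewrite /K sub_kermx => /eqP /rowP /(_ j); rewrite ev_mulT mxE.
have rD : \rank Dm = (n - \rank A)%N.
  rewrite -(mxrank_tr A) -mxrank_ker -/K; apply/eqP; rewrite eqn_leq !mxrankS //.
    by apply/row_subP => i; rewrite hK row_sub.
  by apply/row_subP => i; rewrite -hK row_sub.
suff : forall k, k = \rank A -> exists Y : 'M[R]_(k, n), polar_basis mu Y.
  by apply; rewrite rD subKn // rank_leq_col.
move=> k ->; exists (row_base A); split; first exact: row_base_free.
by move=> xi; rewrite eq_row_base; apply: hA.
Qed.

Definition spanL (xs : seq V) : 'M[R]_n := foldr (fun x A => (x + A)%MS) 0 xs.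

Lemma spanL_sub {m} xs (B : 'M[R]_(m, n)) : (forall x, x \in xs -> (x <= B)%MS) ->
  (spanL xs <= B)%MS.
Proof.
elim: xs => [|x xs IH] h /=; first exact: sub0mx.
rewrite addsmx_sub h ?inE ?eqxx // IH // => y yx.
by apply: h; rewrite inE yx orbT.
Qed.

Lemma in_spanL {m : F} {xs l y} : (y <= spanL l)%MS ->
  (forall x, x \in l -> wedge1 x (wedges xs m) = zeroF) ->
  wedge1 y (wedges xs m) = zeroF.
Proof.
elim: l y => [|x l IH] y /=.
  by rewrite submx0 => /eqP -> _; exact: wedge1_0.
move=> /sub_addsmxP [u ->] h.
rewrite [u.1]mx11_scalar mul_scalar_mx.
apply: functional_extensionality => vs; rewrite wedge1_linv.
rewrite h ?inE ?eqxx // IH ?submxMl //; first by rewrite /zeroF mulr0 addr0.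
by move=> z zl; apply: h; rewrite inE zl orbT.
Qed.

Lemma indep {m : F} {xs} : wedges xs m <> zeroF -> (size xs <= \rank (spanL xs))%N.
Proof.
elim: xs => [|x xs IH] //= h.
have h1 : wedges xs m <> zeroF by move=> e; apply: h; rewrite e wedge1_zero.
have nx : ~~ (x <= spanL xs)%MS.
  apply/negP => hx; apply: h; apply: (in_spanL hx) => y yx.
  exact: wedge1_mem.
have hlt : (spanL xs < x + spanL xs)%MS.
  rewrite ltmxE addsmxSr /=; apply: contra nx => hh.
  exact: submx_trans (addsmxSl _ _) hh.
have := rank_ltmx hlt; have := IH h1; lia.
Qed.

Definition zetaW {k} (W : 'M[R]_(k, n)) (mu : F) := ctrs (rowsl W) mu.

Lemma part_a1 {mu : F} {p k} {Y : 'M[R]_(k, n)} :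
  good p mu -> mu <> zeroF -> polar_basis mu Y -> (k.+1 != p) && (k <= p)%N.
Proof.
move=> gm mu0 hY.
have [W hW] := dual_exists (proj1 hY).
have hd := polar_div hW (polar_rows hY).
have gz := good_ctrs (rowsl W) gm; rewrite size_rowsl in gz.
have kp : (k <= p)%N.
  rewrite leqNgt; apply/negP => pk; apply: mu0; rewrite hd.
  have -> : ctrs (rowsl W) mu = zeroF.
    apply: functional_extensionality => vs; rewrite /ctrs.
    case: gm => sm _; apply: sm; rewrite size_cat size_rowsl.
    by apply/eqP => e; move: pk; rewrite -e ltnNge leq_addr.
  exact: wedges_zero.
rewrite kp andbT; apply/negP => /eqP pk1; apply: mu0.
set zeta := ctrs (rowsl W) mu in hd gz.
have {}gz : good 1 zeta by move: gz; rewrite -pk1 subSn // subnn.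
pose eta : V := \row_j zeta [:: delta_mx 0 j].
have ez : forall v, zeta [:: v] = ev eta v.
  move=> v; rewrite {1}(row_sum_delta v).
  case: (gz) => _ /(_ [::]) [l0 _].
  have l0' : lin0 zeta by exact: l0.
  rewrite (lin0_sum _ _ _ _ _ _ l0') /ev; apply: eq_bigr => j _.
  by rewrite mxE mulrC.
have zw : zeta = wedge1 eta form1.
  apply: functional_extensionality => vs.
  case: vs => [|v [|v2 vs]].
  - by rewrite wedge1_nil; case: gz => sz _; apply: sz.
  - rewrite wedge1_cons ez /= mulr1.
    have -> : ctr v (form1 : F) = zeroF by apply: functional_extensionality.
    by rewrite wedge1_zero /zeroF subr0.
  - rewrite wedge1_cons.
    have -> : ctr v (form1 : F) = zeroF by apply: functional_extensionality.
    by rewrite wedge1_zero /zeroF /= mulr0 subr0; case: gz => sz _; apply: sz.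
have eP : wedge1 eta mu = zeroF.
  apply: functional_extensionality => vs.
  rewrite hd wedge1_wedges.
  have -> : wedge1 eta zeta = zeroF.
    by apply: functional_extensionality => ws; rewrite zw wedge1_same.
  by rewrite wedges_zero /zeroF mulr0.
have /submxP [a ea] := (proj2 hY eta).1 eP.
have a0 : a = 0.
  apply/rowP => j; rewrite mxE.
  have : ev eta (row j W) = 0.
    rewrite -ez /zeta /ctrs; apply: (good_alt_in _ _ _ gm).
    by apply/mapP; exists j => //; rewrite mem_enum.
  rewrite ea mulmx_sum_row ev_suml.
  under eq_bigr => i _ do rewrite hW.
  by rewrite sum_delta.
rewrite hd; have -> : zeta = zeroF.
  by rewrite zw ea a0 mul0mx wedge1_0.
exact: wedges_zero.
Qed.

Lemma part_a2 {mu : F} {p k} {Y : 'M[R]_(k, n)} :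
  good p mu -> mu <> zeroF -> polar_basis mu Y -> (k = p <-> decomposable p mu).
Proof.
move=> gm mu0 hY.
have [W hW] := dual_exists (proj1 hY).
have hd := polar_div hW (polar_rows hY).
have gz := good_ctrs (rowsl W) gm; rewrite size_rowsl in gz.
split => [kp|[c [xs [sx e]]]].
  set zeta := ctrs (rowsl W) mu in hd gz.
  have {}gz : good 0 zeta by move: gz; rewrite kp subnn.
  pose c0 := zeta [::].
  exists c0, (rowsl Y); split; first by rewrite size_rowsl.
  have ez : zeta = fun vs => c0 * form1 vs.
    apply: functional_extensionality => vs; case: vs => [|v vs] /=.
      by rewrite mulr1.
    by rewrite mulr0; case: gz => sz _; apply: sz.
  by rewrite {1}hd ez wedges_scale.
apply/eqP; rewrite eqn_leq (proj2 (andP (part_a1 gm mu0 hY))) /=.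
have nz : wedges xs form1 <> zeroF.
  move=> h; apply: mu0; rewrite e h; apply: functional_extensionality => vs.
  by rewrite /zeroF mulr0.
have := indep nz; rewrite sx => h; apply: (leq_trans h).
have <- : \rank Y = k by apply/eqP; exact: (proj1 hY).
apply: mxrankS; apply: spanL_sub => x xx; apply/(proj2 hY).
apply: functional_extensionality => vs.
have -> : mu = fun vs => c * wedges xs form1 vs by [].
by rewrite wedge1_scale wedge1_mem // /zeroF mulr0.
Qed.

Lemma enum_ord_sorted (A : {set 'I_n}) :
  sorted (relpre (@nat_of_ord n) ltn) (enum A).
Proof.
have -> : enum A = filter (mem A) (enum 'I_n) by rewrite enumT.
apply: sorted_filter; first by move=> a b c /= h1 h2; exact: ltn_trans h1 h2.
by have := iota_ltn_sorted 0 n; rewrite -val_enum_ord sorted_map.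
Qed.

Lemma enum_setU1_min (j0 : 'I_n) (S : {set 'I_n}) :
  (forall i, i \in S -> (j0 < i)%N) -> enum (j0 |: S) = j0 :: enum S.
Proof.
move=> h; apply: (@irr_sorted_eq _ (relpre (@nat_of_ord n) ltn)).
- by move=> a b c /= h1 h2; exact: ltn_trans h1 h2.
- by move=> a /=; rewrite ltnn.
- exact: enum_ord_sorted.
- rewrite /= path_sortedE; last by move=> a b c /= h1 h2; exact: ltn_trans h1 h2.
  rewrite enum_ord_sorted andbT; apply/allP => i; rewrite mem_enum; exact: h.
- by move=> i; rewrite mem_enum in_setU1 inE mem_enum.
Qed.

Definition Wf (X : 'M[R]_n) (S : {set 'I_n}) : F :=
  wedges [seq row i X | i <- enum S] form1.

Definition inspan (X : 'M[R]_n) (Q : pred {set 'I_n}) (f : F) :=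
  exists c : {set 'I_n} -> R,
    f = (fun vs => \sum_(S : {set 'I_n} | Q S) c S * Wf X S vs).

Lemma inspan_zero X Q : inspan X Q zeroF.
Proof.
exists (fun _ => 0); apply: functional_extensionality => vs.
by rewrite big1 // => S _; rewrite mul0r.
Qed.

Lemma inspan_W X {Q : pred {set 'I_n}} {S0} : Q S0 -> inspan X Q (Wf X S0).
Proof.
move=> q0; exists (fun S => (S == S0)%:R); apply: functional_extensionality => vs.
rewrite (bigD1 S0) //= eqxx mul1r big1 ?addr0 // => S /andP [_ /negPf ->].
by rewrite mul0r.
Qed.

Lemma inspan_comb {X Q} a b {f g : F} : inspan X Q f -> inspan X Q g ->
  inspan X Q (fun vs => a * f vs + b * g vs).
Proof.
move=> [c ->] [d ->]; exists (fun S => a * c S + b * d S).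
apply: functional_extensionality => vs.
rewrite !mulr_sumr -big_split /=; apply: eq_bigr => S _; ring.
Qed.

Lemma inspan_ext X Q (f g : F) : (forall vs, f vs = g vs) -> inspan X Q f -> inspan X Q g.
Proof. by move=> h; have -> : f = g by apply: functional_extensionality. Qed.

Lemma inspan_sum {X Q} {I : finType} {P : pred I} {cf : I -> R} {G : I -> F} :
  (forall i, P i -> inspan X Q (G i)) ->
  inspan X Q (fun vs => \sum_(i | P i) cf i * G i vs).
Proof.
move=> h; rewrite /index_enum; elim: (Finite.enum I) => [|i r IH].
  apply: inspan_ext (inspan_zero X Q) => vs; by rewrite big_nil.
case Pi: (P i).
  apply: (@inspan_ext X Q (fun vs => cf i * G i vs + 1 * \sum_(j <- r | P j) cf j * G j vs)).
    by move=> vs; rewrite big_cons Pi mul1r.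
  exact: (inspan_comb _ _ (h i Pi) IH).
apply: inspan_ext IH => vs; by rewrite big_cons Pi.
Qed.

Lemma inspan_mono {X} {Q Q' : pred {set 'I_n}} {f} : (forall S, Q S -> Q' S) ->
  inspan X Q f -> inspan X Q' f.
Proof.
move=> hQ [c ->]; exists (fun S => if Q S then c S else 0).
apply: functional_extensionality => vs.
rewrite (bigID Q Q') /= [X in _ + X]big1 ?addr0; last first.
  by move=> S /andP [_ /negPf ->]; rewrite mul0r.
rewrite big_mkcond [RHS]big_mkcond; apply: eq_bigr => S _.
by case QS: (Q S); rewrite ?andbT ?andbF ?hQ.
Qed.

Definition QJ q (J : {set 'I_n}) : pred {set 'I_n} :=
  fun S => (#|S| == q) && [forall i in S, i \notin J].

Lemma wedge1_sumspan x (Q : pred {set 'I_n}) (c : {set 'I_n} -> R) (G : {set 'I_n} -> F) vs :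
  wedge1 x (fun ws => \sum_(S | Q S) c S * G S ws) vs =
  \sum_(S | Q S) c S * wedge1 x (G S) vs.
Proof.
rewrite /wedge1; under eq_bigr => i _ do rewrite mulr_sumr.
rewrite exchange_big /=; apply: eq_bigr => S _.
rewrite mulr_sumr; apply: eq_bigr => i _; ring.
Qed.

Lemma expand0 X J (f : F) : good 0 f -> inspan X (QJ 0 J) f.
Proof.
move=> gf.
have q0 : QJ 0 J set0.
  by rewrite /QJ cards0 eqxx /=; apply/forall_inP => i; rewrite in_set0.
apply: (@inspan_ext X _ (fun vs => f [::] * Wf X set0 vs + 0 * Wf X set0 vs)).
  move=> vs; rewrite mul0r addr0 /Wf enum_set0 /=.
  case: vs => [|v vs] /=; first by rewrite mulr1.
  by rewrite mulr0; case: gf => sf _; rewrite sf.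
exact: (inspan_comb _ _ (inspan_W X q0) (inspan_W X q0)).
Qed.

Lemma expand X : X \in unitmx -> forall m q J (f : F), (q + #|~: J| <= m)%N ->
  good q f -> (forall j vs, j \in J -> f (row j (invmx X)^T :: vs) = 0) ->
  inspan X (QJ q J) f.
Proof.
move=> uX; elim=> [|m IH] q J f hm gf hJ.
  have q0 : q = 0%N by lia.
  by move: gf; rewrite q0; exact: expand0.
case: q hm gf hJ => [|q] hm gf hJ; first exact: expand0.
case: (boolP [exists j, j \notin J]) => [/existsP [j1 nj1]|none]; last first.
  have -> : f = zeroF; last exact: inspan_zero.
  apply: functional_extensionality => vs; case: vs => [|v vs].
    by case: gf => sf _; apply: sf.
  rewrite (vec_expand _ v uX); case: (gf) => _ /(_ [::]) [l0 _].
  have l0' : lin0 f by exact: l0.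
  rewrite (lin0_sum _ _ _ _ _ _ l0') /zeroF big1 // => j _.
  rewrite hJ ?mulr0 //; apply: contraR none => nj; apply/existsP; by exists j.
have [j0 nj0 minj0] := @arg_minnP _ j1 (fun j => j \notin J) (fun j => nat_of_ord j) nj1.
set J' := j0 |: J.
have hc : (#|~: J'| < #|~: J|)%N.
  have := cardsC J; have := cardsC J'; rewrite /J' cardsU1 nj0 /=; lia.
set E := fun j => row j (invmx X)^T.
pose g := ctr (E j0) f.
have gg : good q g by exact: (good_ctr (E j0) gf).
have hg : forall j vs, j \in J' -> g (E j :: vs) = 0.
  move=> j vs; rewrite /J' in_setU1 => /orP [/eqP ->|jJ].
    by case: (gf) => _ /(_ [::]) [_ a0]; apply: a0.
  rewrite /g /ctr -[E j0 :: _]/([::] ++ _) (good_antisym _ _ _ _ gf) /=.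
  by rewrite hJ ?oppr0.
pose x0 := row j0 X.
pose h := fun vs => 1 * f vs + (-1) * wedge1 x0 g vs.
have gh : good q.+1 h := good_comb 1 (-1) gf (good_wedge1 x0 gg).
have hh : forall j vs, j \in J' -> h (E j :: vs) = 0.
  move=> j vs hj; rewrite /h wedge1_cons.
  have -> : ctr (E j) g = zeroF.
    by apply: functional_extensionality => ws; rewrite /ctr hg.
  rewrite wedge1_zero /zeroF subr0 /x0 /E dual_inv //.
  move: hj; rewrite /J' in_setU1 => /orP [/eqP ->|jJ].
    by rewrite eqxx /= /g /ctr /E; ring.
  have -> : (j0 == j) = false.
    by apply/negP => /eqP e; move: nj0; rewrite e jJ.
  by rewrite hJ //= /E; ring.
have IHg := IH q J' g ltac:(lia) gg hg.
have IHh := IH q.+1 J' h ltac:(lia) gh hh.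
apply: (@inspan_ext X _ (fun vs => 1 * wedge1 x0 g vs + 1 * h vs)).
  by move=> vs; rewrite /h; ring.
apply: inspan_comb; last first.
  apply: inspan_mono IHh => S; rewrite /QJ => /andP [-> /forall_inP hS] /=.
  apply/forall_inP => i /hS; rewrite /J' in_setU1 negb_or => /andP [_ ->] //.
case: IHg => c ->.
apply: (@inspan_ext X _ (fun vs => \sum_(S | QJ q J' S) c S * wedge1 x0 (Wf X S) vs)).
  by move=> vs; rewrite wedge1_sumspan.
apply: inspan_sum => S; rewrite /QJ => /andP [/eqP cS /forall_inP hS].
have Sgt : forall i, i \in S -> (j0 < i)%N.
  move=> i /hS; rewrite /J' in_setU1 negb_or => /andP [ne nJ].
  by rewrite ltn_neqAle minj0 // andbT; apply: contra ne => /eqP e; apply/eqP/val_inj.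
have -> : wedge1 x0 (Wf X S) = Wf X (j0 |: S) by rewrite /Wf enum_setU1_min.
apply: inspan_W; rewrite /QJ cardsU1 cS.
have -> : j0 \notin S by apply/negP => /Sgt; rewrite ltnn.
rewrite eqxx /=; apply/forall_inP => i; rewrite in_setU1 => /orP [/eqP -> //|/hS].
by rewrite /J' in_setU1 negb_or => /andP [_ ->].
Qed.

Lemma set_nth_cat2 (ws vs : seq V) i (y : V) :
  set_nth 0 (ws ++ vs) (size ws + i) y = ws ++ set_nth 0 vs i y.
Proof. by elim: ws => //= w ws ->. Qed.

Lemma nth_cat2 (ws vs : seq V) i : nth 0 (ws ++ vs) (size ws + i) = nth 0 vs i.
Proof. by rewrite nth_cat ltnNge leq_addr /= addKn. Qed.

Lemma ctrs_pform p ws (f : F) : is_pform p f -> (size ws <= p)%N ->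
  is_pform (p - size ws) (ctrs ws f).
Proof.
move=> [hs hl ha] wp; split.
- move=> vs hv; rewrite /ctrs; apply: hs; rewrite size_cat.
  by apply: contra hv => /eqP <-; rewrite addKn.
- move=> vs i a u w hi; rewrite /ctrs -!set_nth_cat2; apply: hl.
  by rewrite size_cat ltn_add2l.
- move=> vs i j hij hj e; rewrite /ctrs.
  apply: (ha _ (size ws + i) (size ws + j)); first by rewrite ltn_add2l.
    by rewrite size_cat ltn_add2l.
  by rewrite !nth_cat2.
Qed.

Lemma part_b (mu : F) p s (X : 'M[R]_n) :
  is_pform p mu -> mu <> zeroF -> (s <= p)%N -> (s <= n)%N -> X \in unitmx ->
  (forall xi : 'rV[R]_n, wedge1 xi mu = zeroF <->
            exists a : 'rV[R]_n, xi = a *m X /\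
              (forall i : 'I_n, (s <= i)%N -> a 0 i = 0)) ->
  exists zeta : eform R n,
           [/\ is_pform (p - s) zeta,
               mu = wedges [seq row i X | i <- filter (fun j : 'I_n => (j < s)%N) (enum 'I_n)] zeta,
               indivisible zeta
             & exists c : {set 'I_n} -> R,
                 zeta = (fun vs => \sum_(S : {set 'I_n} |
                            (#|S| == p - s)%N && [forall i in S, (s <= i)%N])
                          c S * wedges [seq row i X | i <- enum S] form1 vs)].
Proof.
move=> hmu mu0 sp sn uX hX.
set l := filter (fun j : 'I_n => (j < s)%N) (enum 'I_n).
have ul : uniq l by apply: filter_uniq; exact: enum_uniq.
have inl : forall j, (j \in l) = (j < s)%N by move=> j; rewrite mem_filter mem_enum andbT.
have sl : size l = s.
  have : map val l = iota 0 s.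
    rewrite -(filter_iota_ltn 0 sn) -val_enum_ord.
    by rewrite filter_map.
  by move/(congr1 size); rewrite size_map size_iota.
set E := fun j => row j (invmx X)^T.
set ws := map E l.
have sws : size ws = s by rewrite size_map.
have hd : forall i j, i \in l -> j \in l -> ev (row i X) (E j) = (i == j)%:R.
  by move=> i j _ _; rewrite /E dual_inv.
have hk : forall i, i \in l -> wedge1 (row i X) mu = zeroF.
  move=> i; rewrite inl => il; apply/hX; exists (delta_mx 0 i); split.
    exact: rowE.
  move=> j sj; rewrite mxE eqxx /=; case: eqP => // ji.
  by move: il; rewrite -ji ltnNge sj.
have emu := @div_lemma _ l (fun i => row i X) E mu ul hd hk.
set zeta := ctrs ws mu in emu.
have gm := pform_good _ _ hmu.
have gz : good (p - s) zeta by rewrite -sws; exact: good_ctrs.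
have zk : forall (j : 'I_n) vs, (j < s)%N -> zeta (E j :: vs) = 0.
  move=> j vs js; rewrite /zeta /ctrs; apply: (good_alt_in _ _ _ gm).
  by apply/mapP; exists j; rewrite ?inl.
exists zeta; split => //.
- by rewrite -sws; apply: ctrs_pform; rewrite // sws.
- move=> xi nz0 h0.
  have hxm : wedge1 xi mu = zeroF.
    apply: functional_extensionality => vs.
    by rewrite {1}emu wedge1_wedges h0 wedges_zero /zeroF mulr0.
  have [vs0 nzv] : exists vs, zeta vs != 0.
    apply: NNPP => H; apply: mu0; rewrite emu.
    have -> : zeta = zeroF; last exact: wedges_zero.
    apply: functional_extensionality => vs.
    case: (eqVneq (zeta vs) 0) => // ne; exfalso; apply: H; by exists vs.
  have [a [ea ha]] := (hX xi).1 hxm.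
  have a0 : a = 0.
    apply/rowP => j; rewrite mxE.
    case: (ltnP j s) => js; last exact: ha.
    have := wedge1_cons xi zeta (E j) vs0; rewrite h0 /zeroF.
    have -> : ctr (E j) zeta = zeroF.
      by apply: functional_extensionality => ws'; rewrite /ctr zk.
    rewrite wedge1_zero /zeroF subr0 ea mulmx_sum_row ev_suml.
    under eq_bigr => i _ do rewrite /E dual_inv //.
    rewrite sum_delta => /eqP; rewrite eq_sym mulf_eq0 (negPf nzv) orbF.
    by move/eqP.
  by move: nz0; rewrite ea a0 mul0mx eqxx.
- pose J := [set i : 'I_n | (i < s)%N].
  have := @expand X uX _ (p - s) J zeta (leqnn _) gz.
  case=> [j vs|c ec].
    by rewrite inE => js; apply: zk.
  exists c; rewrite ec; apply: functional_extensionality => vs.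
  apply: eq_bigl => S; rewrite /QJ; congr (_ && _).
  by apply: eq_forallb => i; rewrite inE -leqNgt.
Qed.
End Forms2.

Theorem lemma4p1 (R : realType) (n p : nat) (mu : eform R n) (Dm : 'M[R]_n)
  (hmu : is_pform p mu) (hnz : mu <> zeroF)
  (hD : forall v : 'rV[R]_n, (v <= Dm)%MS <-> inD mu v) :
  let s := (n - \rank Dm)%N in
  [/\ (s.+1 != p) && (s <= p)%N,
      (s = p <-> decomposable p mu),
      (* (b) *)
      (forall X : 'M[R]_n, X \in unitmx ->
         (forall xi : 'rV[R]_n, wedge1 xi mu = zeroF <->
            exists a : 'rV[R]_n, xi = a *m X /\
              (forall i : 'I_n, (s <= i)%N -> a 0 i = 0)) ->
         exists zeta : eform R n,
           [/\ is_pform (p - s) zeta,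
               mu = wedges [seq row i X | i <- filter (fun j : 'I_n => (j < s)%N) (enum 'I_n)] zeta,
               indivisible zeta
             & exists c : {set 'I_n} -> R,
                 zeta = (fun vs => \sum_(S : {set 'I_n} |
                            (#|S| == p - s)%N && [forall i in S, (s <= i)%N])
                          c S * wedges [seq row i X | i <- enum S] form1 vs)]),
      (* (c) *)
      (forall (Y1 Y2 : 'M[R]_(s, n)) (z1 z2 : eform R n),
         polar_basis mu Y1 -> polar_basis mu Y2 ->
         is_pform (p - s) z1 -> is_pform (p - s) z2 ->
         mu = wedges (rows Y1) z1 -> mu = wedges (rows Y2) z2 ->
         exists c : R, c != 0 /\
           forall vs : seq 'rV[R]_n, (forall v, v \in vs -> inD mu v) ->
             z1 vs = c * z2 vs)
    & (* (d) *)
      (forall (Y : 'M[R]_(s, n)) (z : eform R n),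
         polar_basis mu Y -> is_pform (p - s) z -> mu = wedges (rows Y) z ->
         forall xi : 'rV[R]_n, (exists v, inD mu v /\ ev xi v != 0) ->
           exists vs : seq 'rV[R]_n,
             (forall v, v \in vs -> inD mu v) /\ wedge1 xi z vs != 0)].
Proof.
move=> s.
have gm := pform_good _ _ hmu.
have [Y hY] := polar_exists _ _ hD.
have a1 := part_a1 gm hnz hY.
split.
- exact: a1.
- exact: part_a2 gm hnz hY.
- move=> X uX hX; apply: part_b => //.
    by case/andP: a1.
  exact: leq_subr.
- move=> Y1 Y2 z1 z2 h1 h2 _ _ e1 e2; exact: (part_c _ _ _ _ _ _ _ gm hnz h1 h2 e1 e2).
- move=> Y0 z h _ e; exact: (part_d _ _ _ _ _ gm h e).
Qed.
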